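(* Let $T=\langle 1,b,c\rangle$ with $1<b<c$ and $\gcd(b,c)=1$. Then $\mathcal H_1=\mathrm L(c,1,b,0)$ is an L-shape related to $T$ with $(\delta,\theta)=(1,0)$, and the L-shape $$\mathcal H_2=\begin{cases}\mathrm L(b,2,2b-c,1)&\text{if }c<2b,\\ \mathrm L(b,1+\lfloor c/b\rfloor,b-r,1)&\text{if }c>2b,\text{ where }c=\lfloor c/b\rfloor b+r,\ 0\le r<b,\end{cases}$$ is related to $T$ with $(\delta,\theta)=(0,1)$.
   Context: $T=\langle a,b,c\rangle=\{xa+yb+zc:x,y,z\in\mathbb N\}$ (here $a=1$). For $(i,j)\in\mathbb N^2$ let $[\![i,j]\!]=[i,i+1)\times[j,j+1)\subset\mathbb R^2$. For integers $0\le w<l$, $0\le y<h$, the L-shape $\mathrm L(l,h,w,y)$ is the set of unit squares $[\![i,j]\!]$ with $0\le i<l$, $0\le j<h$, excluding those with $i\ge l-w$ and $j\ge h-y$ (it has $lh-wy$ squares). An L-shape $\mathcal H$ is related to $T$ if it consists of exactly $c$ squares, every residue class modulo $c$ equals $ia+jb \bmod c$ for exactly one $[\![i,j]\!]\in\mathcal H$, and for each $[\![i,j]\!]\in\mathcal H$, $ia+jb=\min\{sa+tb:(s,t)\in\mathbb N^2,\ sa+tb\equiv ia+jb \pmod c\}$. For an L-shape $\mathrm L(l,h,w,y)$, $\delta=(la-yb)/c$ and $\theta=(hb-wa)/c$. *)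

(* Defs.v *)
From HB Require Import structures.
From mathcomp Require Import all_boot all_order all_algebra.
Set Implicit Arguments. Unset Strict Implicit. Unset Printing Implicit Defensive.
Import Order.TTheory GRing.Theory Num.Theory.

(* Square [[i,j]] is represented by the pair (i,j) : nat * nat. *)

Definition is_Lshape (l h w y : nat) : bool := (w < l) && (y < h).

Definition inL (l h w y : nat) (i j : nat) : bool :=
  [&& i < l, j < h & ~~ ((l - w <= i) && (h - y <= j))].

Definition Lsquares (l h w y : nat) : seq (nat * nat) :=
  [seq p <- [seq (i, j) | i <- iota 0 l, j <- iota 0 h] | inL l h w y p.1 p.2].

Definition sqval (a b : nat) (p : nat * nat) : nat := p.1 * a + p.2 * b.

Definition related (a b c : nat) (H : seq (nat * nat)) : Prop :=
  [/\ size H = c,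
      (forall k, k < c -> count (fun p => sqval a b p %% c == k) H = 1) &
      (forall p, p \in H -> forall s t : nat,
          s * a + t * b = sqval a b p %[mod c] -> sqval a b p <= s * a + t * b)].

Local Open Scope ring_scope.

Definition Ldelta (a b c : nat) (l h w y : nat) : rat :=
  ((l * a)%N%:R - (y * b)%N%:R) / c%:R.
Definition Ltheta (a b c : nat) (l h w y : nat) : rat :=
  ((h * b)%N%:R - (w * a)%N%:R) / c%:R.

(* Main.v *)
Require Import Defs.
From HB Require Import structures.
From mathcomp Require Import all_boot all_order all_algebra.
From mathcomp Require Import zify.
Import Order.TTheory GRing.Theory Num.Theory.

Lemma mem_Lsq l h w y p : (p \in Lsquares l h w y) = inL l h w y p.1 p.2.
Proof.
case: p => i j; rewrite /Lsquares mem_filter /=.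
case E: (inL l h w y i j) => //=.
move: E; rewrite /inL => /and3P [Hi Hj _].
by apply: allpairs_f; rewrite mem_iota.
Qed.

Lemma uniq_Lsq l h w y : uniq (Lsquares l h w y).
Proof.
apply: filter_uniq; apply: allpairs_uniq; try exact: iota_uniq.
by move=> [a1 a2] [b1 b2] _ _ /= [-> ->].
Qed.

Lemma related_of (b c : nat) (H : seq (nat * nat)) :
  uniq (map (sqval 1 b) H) ->
  (forall p, p \in H -> sqval 1 b p < c) ->
  (forall v, v < c -> exists2 p, p \in H & sqval 1 b p = v) ->
  related 1 b c H.
Proof.
move=> Hu Hlt Hsur.
have Hp : perm_eq (map (sqval 1 b) H) (iota 0 c).
  apply: uniq_perm => //; first exact: iota_uniq.
  move=> v; rewrite mem_iota add0n /=; apply/idP/idP.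
    by case/mapP => p pH ->; apply: Hlt.
  by move=> vc; case: (Hsur v vc) => p pH <-; apply: map_f.
split.
- by rewrite -(size_map (sqval 1 b)) (perm_size Hp) size_iota.
- move=> k kc.
  rewrite -(count_map (sqval 1 b) (fun v => v %% c == k)) (permP Hp).
  rewrite (@eq_in_count _ _ (pred1 k)); last first.
    by move=> v; rewrite mem_iota add0n /= => vc; rewrite modn_small.
  by rewrite count_uniq_mem ?iota_uniq // mem_iota add0n kc.
- move=> p pH s t E.
  have := Hlt p pH => vc.
  by rewrite -(modn_small vc) -E leq_mod.
Qed.

Theorem lemma12 (b c : nat) :
  1 < b -> b < c -> coprime b c ->
  (is_Lshape c 1 b 0 /\ related 1 b c (Lsquares c 1 b 0) /\
   Ldelta 1 b c c 1 b 0 = 1%R /\ Ltheta 1 b c c 1 b 0 = 0%R) /\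
  (c < 2 * b ->
     is_Lshape b 2 (2 * b - c) 1 /\ related 1 b c (Lsquares b 2 (2 * b - c) 1) /\
     Ldelta 1 b c b 2 (2 * b - c) 1 = 0%R /\ Ltheta 1 b c b 2 (2 * b - c) 1 = 1%R) /\
  (2 * b < c ->
     is_Lshape b (1 + c %/ b) (b - c %% b) 1 /\
     related 1 b c (Lsquares b (1 + c %/ b) (b - c %% b) 1) /\
     Ldelta 1 b c b (1 + c %/ b) (b - c %% b) 1 = 0%R /\
     Ltheta 1 b c b (1 + c %/ b) (b - c %% b) 1 = 1%R).
Proof.
move=> b1 bc cop.
have c0 : (c%:R : rat) != 0%R by rewrite pnatr_eq0; lia.
have injb : forall l h w y, l <= b ->
   {in Lsquares l h w y &, injective (sqval 1 b)}.
  move=> l h w y lb [i j] [i' j']; rewrite !mem_Lsq /inL /sqval /=.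
  move=> /and3P [Hi _ _] /and3P [Hi' _ _] E.
  have e1 : (i * 1 + j * b) %% b = (i' * 1 + j' * b) %% b by rewrite E.
  have e2 : (i * 1 + j * b) %/ b = (i' * 1 + j' * b) %/ b by rewrite E.
  rewrite !muln1 (addnC i) (addnC i') !modnMDl !modn_small in e1; try lia.
  rewrite !muln1 (addnC i) (addnC i') !divnMDl in e2; try lia.
  rewrite !divn_small in e2; try lia.
  by rewrite e1 !addn0 in e2 *; rewrite e2.
split; [|split].
- split; first by rewrite /is_Lshape; apply/andP; split; lia.
  split.
    apply: related_of.
    + rewrite map_inj_in_uniq ?uniq_Lsq //.
      move=> [i j] [i' j']; rewrite !mem_Lsq /inL /sqval /=.
      move=> /and3P [_ Hj _] /and3P [_ Hj' _]; rewrite !muln1 => E.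
      have ej : j = 0 by lia. have ej' : j' = 0 by lia.
      subst j j'; rewrite !mul0n !addn0 in E; by rewrite E.
    + move=> [i j]; rewrite mem_Lsq /inL /sqval /= => /and3P [Hi Hj _].
      have -> : j = 0 by lia. by rewrite mul0n addn0 muln1.
    + move=> v vc; exists (v, 0); last by rewrite /sqval /= muln1 mul0n addn0.
      by rewrite mem_Lsq /inL /=; lia.
  rewrite /Ldelta /Ltheta !muln1 mul0n mul1n subr0 subrr mul0r.
  by split => //; rewrite divff.
- move=> c2b.
  split; first by rewrite /is_Lshape; apply/andP; split; lia.
  split.
    apply: related_of.
    + by rewrite map_inj_in_uniq ?uniq_Lsq //; apply: injb.
    + move=> [i j]; rewrite mem_Lsq /inL /sqval /= => /and3P [Hi Hj Hn].
      rewrite muln1.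
      case: j Hj Hn => [|[|j]] //= _; first by lia.
      rewrite mul1n; lia.
    + move=> v vc; exists (v %% b, v %/ b); last first.
        by rewrite /sqval /= muln1 addnC -divn_eq.
      rewrite mem_Lsq /inL /=; apply/and3P; split.
      * by rewrite ltn_mod; lia.
      * rewrite ltn_divLR; lia.
      * have := divn_eq v b; have := ltn_mod v b.
        have : v %/ b < 2 by rewrite ltn_divLR; lia.
        case: (v %/ b) => [|[|j]] //=; lia.
  rewrite /Ldelta /Ltheta !muln1 mul1n subrr mul0r; split => //.
  set w := (2 * b - c)%N.
  have -> : (2 * b)%N = (c + w)%N by rewrite /w; lia.
  by rewrite natrD addrK divff.
- move=> c2b.
  set q := c %/ b; set r := c %% b.
  have cdef : c = q * b + r by rewrite /q /r -divn_eq.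
  have rb : r < b by rewrite /r ltn_mod; lia.
  have q2 : 2 <= q by rewrite /q leq_divRL; lia.
  have r0 : 0 < r.
    rewrite lt0n; apply/negP => /eqP r0.
    move: cop; rewrite /coprime.
    have -> : c = q * b by lia.
    rewrite gcdnMl => /eqP; lia.
  split; first by rewrite /is_Lshape; apply/andP; split; lia.
  split.
    apply: related_of.
    + by rewrite map_inj_in_uniq ?uniq_Lsq //; apply: injb.
    + move=> [i j]; rewrite mem_Lsq /inL /sqval /= => /and3P [Hi Hj Hn].
      rewrite muln1 cdef.
      have [jq|jq] := ltnP j q.
        have : j.+1 * b <= q * b by rewrite leq_mul2r jq orbT.
        rewrite mulSn.
        lia.
      have -> : j = q by lia.
      have : i < r by lia.
      lia.
    + move=> v vc; exists (v %% b, v %/ b); last first.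
        by rewrite /sqval /= muln1 addnC -divn_eq.
      rewrite mem_Lsq /inL /=; apply/and3P; split.
      * by rewrite ltn_mod; lia.
      * rewrite add1n ltnS /q; apply: leq_div2r; lia.
      * have := divn_eq v b; have := ltn_mod v b.
        have : v %/ b <= q by rewrite /q; apply: leq_div2r; lia.
        move=> Hq Hm Hd.
        apply/negP => /andP [H1 H2].
        have Hq' : v %/ b = q by lia.
        rewrite Hq' in Hd.
        lia.
  rewrite /Ldelta /Ltheta !muln1 mul1n subrr mul0r; split => //.
  have -> : ((1 + q) * b)%N = (c + (b - r))%N by rewrite mulnDl mul1n; lia.
  by rewrite natrD addrK divff.
Qed.
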